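(* Let $G\subset\mathbb R^r$ be a lattice of rank $r$ acting on $C(\mathbb R^r)$ by $f^g(x)=f(x+g)$, and let $A$ be a $G$-invariant vector subspace of $C(\mathbb R^r)$. If $A^G=A\cap C^G$ is finite dimensional, then $P_n^G(A)=A\cap P_n^G$ is finite dimensional for every $n\in\mathbb Z_+$.
   Context: $C(\mathbb R^r)$ is the algebra of continuous (real or complex) functions on $\mathbb R^r$; $x_1,\dots,x_r$ are the standard coordinates. $C^G$ is the set of continuous $G$-periodic functions ($f(x+g)=f(x)$ for all $g\in G$). $P_n^G$ is the space of polynomials in $x_1,\dots,x_r$ of degree at most $n$ with coefficients in $C^G$. $A$ is $G$-invariant if $f\in A$ implies $f(\cdot+g)\in A$ for all $g\in G$. *)

(* Defs.v *)
From HB Require Import structures.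
From mathcomp Require Import all_boot all_order all_algebra.
From mathcomp Require Import all_classical all_reals all_analysis.
Set Implicit Arguments. Unset Strict Implicit. Unset Printing Implicit Defensive.
Import Order.TTheory GRing.Theory Num.Theory.
Import numFieldNormedType.Exports.
Local Open Scope ring_scope.
Local Open Scope classical_set_scope.

(* Functions R^r -> V, with V a real normed space (V = R for real-valued,
   V = R^2 ~ C for complex-valued functions). *)

Definition lattice_of (R : realType) (r : nat) (B : 'M[R]_r) : set 'rV[R]_r :=
  [set (map_mx (fun z : int => z%:~R) z) *m B | z in [set: 'rV[int]_r]].

Definition is_full_lattice (R : realType) (r : nat) (G : set 'rV[R]_r) : Prop :=
  exists B : 'M[R]_r, B \in unitmx /\ G = lattice_of B.

Definition translate (R : realType) (r : nat) (V : Type)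
  (f : 'rV[R]_r -> V) (g : 'rV[R]_r) : 'rV[R]_r -> V := fun x => f (x + g).

Definition is_subspace_C (R : realType) (r : nat) (V : normedModType R)
  (A : set ('rV[R]_r -> V)) : Prop :=
  [/\ (forall f, A f -> continuous f),
      A (fun _ => 0),
      (forall f g, A f -> A g -> A (fun x => f x + g x)) &
      (forall (a : R) f, A f -> A (fun x => a *: f x))].

Definition G_invariant (R : realType) (r : nat) (V : Type)
  (G : set 'rV[R]_r) (A : set ('rV[R]_r -> V)) : Prop :=
  forall f g, A f -> G g -> A (translate f g).

Definition CG (R : realType) (r : nat) (V : normedModType R)
  (G : set 'rV[R]_r) : set ('rV[R]_r -> V) :=
  [set f | continuous f /\ forall g x, G g -> f (x + g) = f x].

Definition monomial (R : realType) (r n : nat) (alpha : {ffun 'I_r -> 'I_n.+1})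
  (x : 'rV[R]_r) : R := \prod_(i < r) (x ord0 i) ^+ (alpha i : nat).

Definition PnG (R : realType) (r : nat) (V : normedModType R)
  (G : set 'rV[R]_r) (n : nat) : set ('rV[R]_r -> V) :=
  [set f | exists c : {ffun 'I_r -> 'I_n.+1} -> ('rV[R]_r -> V),
     (forall alpha, CG G (c alpha)) /\
     forall x, f x = \sum_(alpha : {ffun 'I_r -> 'I_n.+1} | (\sum_(i < r) (alpha i : nat) <= n)%N)
                       monomial alpha x *: c alpha x].

Definition finite_dim (R : realType) (r : nat) (V : normedModType R)
  (S : set ('rV[R]_r -> V)) : Prop :=
  exists (m : nat) (b : 'I_m -> ('rV[R]_r -> V)),
    forall f, S f -> exists c : 'I_m -> R, forall x, f x = \sum_(i < m) c i *: b i x.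

(* Main.v *)
Set Warnings "-all".
Require Import Defs.
From HB Require Import structures.
From mathcomp Require Import all_boot all_order all_algebra.
From mathcomp Require Import all_classical all_reals all_analysis.
Import Order.TTheory GRing.Theory Num.Theory.
Import numFieldNormedType.Exports.
Local Open Scope ring_scope.
Local Open Scope classical_set_scope.
Set Implicit Arguments. Unset Strict Implicit.

Lemma rowspace_fin (R : realType) (N : nat) (C : set 'rV[R]_N) :
  exists k (M : 'M[R]_(k, N)), (forall i, C (row i M)) /\
    forall c, C c -> exists D : 'rV[R]_k, c = D *m M.
Proof.
pose P := fun n => `[< exists k (M : 'M[R]_(k, N)), (forall i, C (row i M)) /\ \rank M = n >].
have exP : exists n, P n.
  exists 0%N; apply/asboolP; exists 0%N, 0; split; first by case.
  by rewrite mxrank0.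
have ubP : forall n, P n -> (n <= N)%N.
  by move=> n /asboolP [k [M [_ <-]]]; exact: rank_leq_col.
case: (ex_maxnP exP ubP) => n /asboolP [k [M [HM Hr]]] Hmax.
exists k, M; split => // c Cc.
have Hs : (M <= col_mx M c)%MS by rewrite -addsmxE addsmxSl.
have Hle : (\rank (col_mx M c) <= n)%N.
  apply: Hmax; apply/asboolP; exists (k + 1)%N, (col_mx M c); split => //.
  move=> i; rewrite -(fintype.splitK i); case: (fintype.split i) => j /=.
  - by rewrite rowKu.
  - rewrite rowKd. have -> : j = 0 by apply/val_inj => /=; case: j => [[]].
    by rewrite row_id.
have := mxrank_leqif_sup Hs.
move=> [_ Heq].
have : (col_mx M c <= M)%MS.
  rewrite -Heq; apply/eqP/anti_leq; rewrite Hr Hle andbT -Hr.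
  exact: mxrankS.
rewrite col_mx_sub => /andP [_ /submxP [D ->]].
by exists D.
Qed.

Lemma fd_step (R : realType) (r : nat) (V : normedModType R) (p m : nat)
  (g : 'I_p -> 'rV[R]_r) (S : set ('rV[R]_r -> V)) (b : 'I_m -> 'rV[R]_r -> V) :
  (forall k (D : 'I_k -> R) (fs : 'I_k -> 'rV[R]_r -> V) f, S f -> (forall l, S (fs l)) ->
      S (fun y => f y - \sum_l D l *: fs l y)) ->
  (forall j f, S f -> exists c : 'I_m -> R, forall x,
      f (x + g j) - f x = \sum_i c i *: b i x) ->
  finite_dim [set f | S f /\ forall j x, f (x + g j) = f x] ->
  finite_dim S.
Proof.
move=> Hcl Himg [q [e He]].
pose C := [set v : 'rV[R]_(p * m) | exists f, S f /\ forall j x,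
   f (x + g j) - f x = \sum_i (vec_mx v) j i *: b i x].
have [k [M [HM HD]]] := @rowspace_fin R _ C.
have [fs Hfs] := boolp.choice HM.
exists (q + k)%N, (fun t => match fintype.split t with inl a => e a | inr l => fs l end).
move=> f Sf.
have [cj Hcj] := boolp.choice (fun j => Himg j f Sf).
pose v := mxvec (\matrix_(j, i) cj j i).
have Cv : C v.
  by exists f; split=> // j x; rewrite mxvecK; under eq_bigr => i _ do rewrite mxE; exact: Hcj.
have [D HvD] := HD v Cv.
pose h := fun y => f y - \sum_l D 0 l *: fs l y.
have Sh : S h := Hcl _ _ _ _ Sf (fun l => (Hfs l).1).
have Hper : forall j x, h (x + g j) = h x.
  move=> j x; apply/eqP; rewrite -subr_eq0; apply/eqP.
  rewrite /h.
  transitivity ((f (x + g j) - f x) - \sum_l D 0 l *: (fs l (x + g j) - fs l x)).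
    rewrite (eq_bigr _ (fun l _ => scalerBr _ _ _)) sumrB.
    by rewrite !opprB addrACA [RHS]addrACA (addrC (- _)).
  rewrite Hcj.
  under [X in _ - X = _]eq_bigr => l _ do rewrite ((Hfs l).2 j x).
  have Hc : forall i, cj j i = \sum_l D 0 l * (vec_mx (row l M)) j i.
    move=> i; have := congr1 (fun w => (vec_mx w) j i) HvD.
    rewrite /= mxvecK mxE => ->.
    by rewrite mulmx_sum_row linear_sum summxE; apply: eq_bigr => l _; rewrite linearZ mxE.
  under [X in X - _ = _]eq_bigr => i _ do rewrite Hc scaler_suml.
  rewrite exchange_big /=; apply/eqP; rewrite subr_eq0; apply/eqP.
  apply: eq_bigr => l _; rewrite scaler_sumr; apply: eq_bigr => i _.
  by rewrite scalerA.
have [a Ha] := He h (conj Sh Hper).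
exists (fun t => match fintype.split t with inl a' => a a' | inr l => D 0 l end).
move=> x; rewrite big_split_ord /=.
under eq_bigr => i _ do rewrite (unsplitK (inl i : 'I_q + 'I_k)).
under [X in _ + X]eq_bigr => i _ do rewrite (unsplitK (inr i : 'I_q + 'I_k)).
by rewrite -Ha /h subrK.
Qed.

Lemma closed_sum (R : realType) (T : Type) (V : normedModType R) (P : set (T -> V)) :
  P (fun _ => 0) -> (forall f h, P f -> P h -> P (fun x => f x + h x)) ->
  (forall (a : R) f, P f -> P (fun x => a *: f x)) ->
  forall (I : Type) (s : seq I) (Q : pred I) (F : I -> T -> V),
  (forall i, Q i -> P (F i)) -> P (fun x => \sum_(i <- s | Q i) F i x).
Proof.
move=> P0 Padd Pscl I s Q F HF; elim: s => [|a s IH].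
  by have -> : (fun x => \sum_(i <- [::] | Q i) F i x) = fun _ => 0
    by apply: funext => x; rewrite big_nil.
case Qa: (Q a).
  have -> : (fun x => \sum_(i <- a :: s | Q i) F i x) =
    fun x => F a x + \sum_(i <- s | Q i) F i x
    by apply: funext => x; rewrite big_cons Qa.
  by apply: Padd => //; apply: HF.
have -> : (fun x => \sum_(i <- a :: s | Q i) F i x) =
  fun x => \sum_(i <- s | Q i) F i x
  by apply: funext => x; rewrite big_cons Qa.
exact: IH.
Qed.

Lemma closed_lc (R : realType) (T : Type) (V : normedModType R) (P : set (T -> V)) :
  P (fun _ => 0) -> (forall f h, P f -> P h -> P (fun x => f x + h x)) ->
  (forall (a : R) f, P f -> P (fun x => a *: f x)) ->
  forall k (D : 'I_k -> R) (fs : 'I_k -> T -> V) f, P f -> (forall l, P (fs l)) ->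
      P (fun y => f y - \sum_l D l *: fs l y).
Proof.
move=> P0 Padd Pscl k D fs f Pf Pfs.
have -> : (fun y => f y - \sum_l D l *: fs l y) =
   fun y => f y + (-1) *: (\sum_l D l *: fs l y)
  by apply: funext => y; rewrite scaleN1r.
apply: (Padd) => //; apply: (Pscl).
apply: (@closed_sum R T V P P0 Padd Pscl _ _ _ (fun l y => D l *: fs l y)) => l _.
exact: Pscl.
Qed.

Inductive Qp (R : realType) (r : nat) (V : normedModType R) (G : set 'rV[R]_r) :
  nat -> ('rV[R]_r -> V) -> Prop :=
| Qper n c : CG G c -> Qp G n c
| Qadd n f h : Qp G n f -> Qp G n h -> Qp G n (fun x => f x + h x)
| Qscl n (a : R) f : Qp G n f -> Qp G n (fun x => a *: f x)
| Qmul n (i : 'I_r) f : Qp G n f -> Qp G n.+1 (fun x => x ord0 i *: f x).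

Lemma CG0 (R : realType) (r : nat) (V : normedModType R) (G : set 'rV[R]_r) :
  CG G (fun _ => (0 : V)).
Proof. rewrite /CG /=; split; last by []. exact: cst_continuous. Qed.

Lemma CGtrans (R : realType) (r : nat) (V : normedModType R) (G : set 'rV[R]_r)
  (c : 'rV[R]_r -> V) (h : 'rV[R]_r) : CG G c -> CG G (fun x => c (x + h)).
Proof.
move=> [Hc Hp]; rewrite /CG /=; split.
  move=> x; apply: (continuous_comp (f := fun y : 'rV[R]_r => y + h) (g := c)); last exact: Hc.
  exact: (cvgD cvg_id (cvg_cst h)).
move=> g x Gg; rewrite (addrAC x g h); exact: Hp.
Qed.

Lemma Q0 (R : realType) (r : nat) (V : normedModType R) (G : set 'rV[R]_r) n :
  Qp G n (fun _ => (0 : V)).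
Proof. by apply: Qper; exact: CG0. Qed.

Lemma Qmono (R : realType) (r : nat) (V : normedModType R) (G : set 'rV[R]_r) n
  (f : 'rV[R]_r -> V) : Qp G n f -> Qp G n.+1 f.
Proof.
elim=> {n f} [n c Hc|n f h _ IHf _ IHh|n a f _ IH|n i f _ IH].
- exact: Qper.
- exact: Qadd.
- exact: Qscl.
- exact: Qmul.
Qed.

Lemma Qmono_le (R : realType) (r : nat) (V : normedModType R) (G : set 'rV[R]_r) m n
  (f : 'rV[R]_r -> V) : (m <= n)%N -> Qp G m f -> Qp G n f.
Proof.
move=> /subnK <-; elim: (n - m)%N => [|k IH] Hf //=.
by rewrite addSn; apply: Qmono; apply: IH.
Qed.

Lemma Qtrans (R : realType) (r : nat) (V : normedModType R) (G : set 'rV[R]_r) n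
  (f : 'rV[R]_r -> V) (h : 'rV[R]_r) : Qp G n f -> Qp G n (fun x => f (x + h)).
Proof.
elim=> {n f} [n c Hc|n f k _ IHf _ IHh|n a f _ IH|n i f Hf IH].
- by apply: Qper; exact: CGtrans.
- exact: (Qadd IHf IHh).
- exact: (Qscl a IH).
- have -> : (fun x : 'rV[R]_r => (x + h) ord0 i *: f (x + h)) =
     fun x => x ord0 i *: f (x + h) + h ord0 i *: f (x + h)
    by apply: funext => x; rewrite mxE scalerDl.
  apply: Qadd; first exact: Qmul.
  by apply: Qmono; apply: Qscl.
Qed.

Lemma QDelta (R : realType) (r : nat) (V : normedModType R) (G : set 'rV[R]_r)
  (g : 'rV[R]_r) : G g -> forall n (f : 'rV[R]_r -> V), Qp G n f ->
  Qp G n.-1 (fun x => f (x + g) - f x) /\ (n = 0%N -> forall x, f (x + g) - f x = 0).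
Proof.
move=> Gg n f; elim=> {n f} [n c Hc|n f k _ [IHf IHf0] _ [IHh IHh0]|n a f _ [IH IH0]|n i f Hf [IH IH0]].
- have E : forall x, c (x + g) - c x = 0 by move=> x; rewrite Hc.2 // subrr.
  split=> //.
  have -> : (fun x => c (x + g) - c x) = fun _ => 0 by apply: funext => x; exact: E.
  exact: Q0.
- have E : forall x, f (x + g) + k (x + g) - (f x + k x) =
     (f (x + g) - f x) + (k (x + g) - k x)
    by move=> x; rewrite opprD addrACA.
  split; last by move=> n0 x; rewrite E IHf0 // IHh0 // addr0.
  have -> : (fun x => f (x + g) + k (x + g) - (f x + k x)) =
     fun x => (f (x + g) - f x) + (k (x + g) - k x) by apply: funext => x; exact: E.
  exact: Qadd.
- split; last by move=> n0 x; rewrite -scalerBr IH0 // scaler0.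
  have -> : (fun x => a *: f (x + g) - a *: f x) = fun x => a *: (f (x + g) - f x)
    by apply: funext => x; rewrite scalerBr.
  exact: Qscl.
- split => //=.
  have -> : (fun x : 'rV[R]_r => (x + g) ord0 i *: f (x + g) - x ord0 i *: f x) =
     fun x => x ord0 i *: (f (x + g) - f x) + g ord0 i *: f (x + g)
    by apply: funext => x; rewrite mxE scalerDl scalerBr addrAC.
  apply: Qadd; last by apply: Qscl; apply: Qtrans.
  case: n Hf IH IH0 => [|n] Hf IH IH0.
    have -> : (fun x : 'rV[R]_r => x ord0 i *: (f (x + g) - f x)) = fun _ => 0
      by apply: funext => x; rewrite IH0 // scaler0.
    exact: Q0.
  exact: Qmul.
Qed.

Lemma Qpow (R : realType) (r : nat) (V : normedModType R) (G : set 'rV[R]_r) m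
  (f : 'rV[R]_r -> V) (a : 'I_r) k : Qp G m f ->
  Qp G (k + m)%N (fun x => x ord0 a ^+ k *: f x).
Proof.
move=> Hf; elim: k => [|k IH].
  by have -> : (fun x : 'rV[R]_r => x ord0 a ^+ 0 *: f x) = f
    by apply: funext => x; rewrite expr0 scale1r.
have -> : (fun x : 'rV[R]_r => x ord0 a ^+ k.+1 *: f x) =
   fun x => x ord0 a *: (x ord0 a ^+ k *: f x)
  by apply: funext => x; rewrite exprS scalerA.
exact: Qmul.
Qed.

Lemma Qmonomial (R : realType) (r : nat) (V : normedModType R) (G : set 'rV[R]_r) n
  (alpha : {ffun 'I_r -> 'I_n.+1}) (c : 'rV[R]_r -> V) : CG G c ->
  forall s : seq 'I_r, Qp G (\sum_(i <- s) (alpha i : nat))%N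
     (fun x => (\prod_(i <- s) x ord0 i ^+ (alpha i : nat)) *: c x).
Proof.
move=> Hc; elim=> [|a s IH].
  have -> : (fun x : 'rV[R]_r => (\prod_(i <- [::]) x ord0 i ^+ (alpha i : nat)) *: c x) = c
    by apply: funext => x; rewrite big_nil scale1r.
  by rewrite big_nil; exact: Qper.
have -> : (fun x : 'rV[R]_r => (\prod_(i <- a :: s) x ord0 i ^+ (alpha i : nat)) *: c x) =
   fun x => x ord0 a ^+ (alpha a : nat) *: ((\prod_(i <- s) x ord0 i ^+ (alpha i : nat)) *: c x)
  by apply: funext => x; rewrite big_cons scalerA.
rewrite big_cons; exact: Qpow.
Qed.

Lemma PnG_Q (R : realType) (r : nat) (V : normedModType R) (G : set 'rV[R]_r) n
  (f : 'rV[R]_r -> V) : PnG G n f -> Qp G n f.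
Proof.
move=> [c [Hc Hf]].
have -> : f = fun x => \sum_(alpha : {ffun 'I_r -> 'I_n.+1} | (\sum_(i < r) (alpha i : nat) <= n)%N)
                       monomial alpha x *: c alpha x by apply: funext.
apply: (closed_sum (@Q0 R r V G n) (@Qadd _ _ _ G n) (@Qscl _ _ _ G n) (index_enum _)
  (Q := fun alpha : {ffun 'I_r -> 'I_n.+1} => (\sum_(i < r) (alpha i : nat) <= n)%N)
  (F := fun alpha x => monomial alpha x *: c alpha x)) => alpha Ha.
apply: (Qmono_le Ha).
rewrite /monomial; exact: (Qmonomial alpha (Hc alpha) (index_enum 'I_r)).
Qed.

Lemma per_int (R : realType) (r : nat) (V : normedModType R) (f : 'rV[R]_r -> V)
  (g : 'rV[R]_r) : (forall x, f (x + g) = f x) -> forall (z : int) x, f (x + z%:~R *: g) = f x.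
Proof.
move=> Hg.
have Hn : forall (k : nat) x, f (x + k%:R *: g) = f x.
  elim=> [|k IH] x; first by rewrite scale0r addr0.
  by rewrite mulrSr scalerDl scale1r addrA Hg IH.
case=> k x; first exact: Hn.
rewrite NegzE mulrNz scaleNr.
by have := Hn k.+1 (x - k.+1%:R *: g); rewrite subrK => ->.
Qed.

Lemma per_sum (R : realType) (r : nat) (V : normedModType R) (f : 'rV[R]_r -> V)
  (I : Type) (s : seq I) (t : I -> 'rV[R]_r) :
  (forall i x, f (x + t i) = f x) -> forall x, f (x + \sum_(i <- s) t i) = f x.
Proof.
move=> Ht; elim: s => [|a s IH] x; first by rewrite big_nil addr0.
by rewrite big_cons addrCA addrC Ht IH.
Qed.

Unset Implicit Arguments.

Theorem theorem3p3 (R : realType) (r : nat) (V : normedModType R)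
  (G : set 'rV[R]_r) (A : set ('rV[R]_r -> V)) :
  is_full_lattice G ->
  is_subspace_C A ->
  G_invariant G A ->
  finite_dim (A `&` CG G) ->
  forall n : nat, finite_dim (A `&` PnG G n).
Proof.
move=> [B [HB HG]] [Acont A0 Aadd Ascl] Hinv Hfd n.
pose g := fun j : 'I_r => row j B.
have Gg : forall j, G (g j).
  move=> j; rewrite HG /lattice_of /=; exists (delta_mx 0 j) => //.
  rewrite /g rowE; congr (_ *m _); apply/matrixP => a b; rewrite !mxE.
  by case: (_ && _).
have Ker : forall f, A f -> (forall j x, f (x + g j) = f x) -> CG G f.
  move=> f Af Hp; rewrite /CG /=; split; first exact: Acont.
  move=> h x; rewrite HG => -[z _ <-].
  rewrite mulmx_sum_row; apply: per_sum => j y; rewrite mxE. exact: (per_int (Hp j)).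
have main : forall n, finite_dim (A `&` Qp G n).
  elim=> [|m [k [b Hb]]].
  - case: Hfd => q [e He]; exists q, e => f [Af Qf]; apply: He; split => //.
    apply: Ker => // j x; apply/eqP; rewrite -subr_eq0; apply/eqP.
    exact: ((QDelta (Gg j) Qf).2 erefl x).
  - apply: (fd_step (g := g) (b := b)).
    + move=> k' D fs f [Af Qf] Hfs; split.
      * apply: (closed_lc A0 Aadd Ascl) => // l; exact: (Hfs l).1.
      * apply: (closed_lc (@Q0 _ _ _ G _) (@Qadd _ _ _ G _) (@Qscl _ _ _ G _)) => // l.
        exact: (Hfs l).2.
    + move=> j f [Af Qf]; apply: Hb; split.
      * have -> : (fun x => f (x + g j) - f x) = fun x => translate f (g j) x + (-1) *: f x
          by apply: funext => x; rewrite scaleN1r.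
        apply: Aadd; [exact: Hinv | exact: Ascl].
      * exact: (QDelta (Gg j) Qf).1.
    + case: Hfd => q [e He]; exists q, e => f [[Af _] Hp]; apply: He; split => //.
      exact: Ker.
have [k [b Hb]] := main n; exists k, b => f [Af Pf]; apply: Hb; split => //.
exact: PnG_Q.
Qed.
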